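(* Let $d:\mathbb{R}\to\mathbb{R}$ be a derivation and $\alpha\ge1$. Then the function $F_{d,\alpha}:\mathbb{R}_+\to\mathbb{R}_+$, $F_{d,\alpha}(x)=x^\alpha\exp\big(d(x)/x\big)$, is multiplicative and Jensen convex, i.e. $F_{d,\alpha}\big(\frac{x+y}{2}\big)\le\frac{F_{d,\alpha}(x)+F_{d,\alpha}(y)}{2}$ for all $x,y>0$. Hence, if $d$ is a nonzero derivation, then $F_{d,\alpha}$ is a discontinuous function which is Jensen convex and multiplicative.
   Context: $\mathbb{R}_+=]0,\infty[$. A derivation is a function $d:\mathbb{R}\to\mathbb{R}$ that is additive and satisfies $d(xy)=xd(y)+yd(x)$ for all $x,y\in\mathbb{R}$. A function $m:\mathbb{R}_+\to\mathbb{R}_+$ is multiplicative if $m(xy)=m(x)m(y)$ for all $x,y>0$. *)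

(* Defs.v *)
From Stdlib Require Import Reals.
Open Scope R_scope.

Definition is_derivation (d : R -> R) : Prop :=
  (forall x y, d (x + y) = d x + d y) /\
  (forall x y, d (x * y) = x * d y + y * d x).

(* F_{d,alpha}(x) = x^alpha * exp(d(x)/x); only meaningful for x > 0
   (Rpower x a = exp (a * ln x)). *)
Definition F_da (d : R -> R) (alpha : R) (x : R) : R :=
  Rpower x alpha * exp (d x / x).

(* Main.v *)
Require Import Defs.
From Stdlib Require Import Reals Lra.
Open Scope R_scope.

Lemma ln_le_sub1 t : 0 < t -> ln t <= t - 1.
Proof.
  intros Ht. pose proof (exp_ineq1_le (t - 1)).
  destruct (Rle_lt_or_eq_dec t (exp (t-1))) as [H1|H1]; [lra| |].
  - left. rewrite <- (ln_exp (t-1)). apply ln_increasing; auto.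
  - rewrite H1, ln_exp. lra.
Qed.

Lemma tangent A c : exp c * (1 + (A - c)) <= exp A.
Proof.
  pose proof (exp_ineq1_le (A - c)).
  replace A with (c + (A - c)) at 2 by ring. rewrite exp_plus.
  apply Rmult_le_compat_l; [left; apply exp_pos | lra].
Qed.

Lemma lnconv x y : 0 < x -> 0 < y ->
  (x + y) * ln ((x+y)/2) <= x * ln x + y * ln y.
Proof.
  intros Hx Hy. set (m := (x+y)/2).
  assert (Hm : 0 < m) by (unfold m; lra).
  pose proof (ln_le_sub1 (m / x) ltac:(apply Rdiv_lt_0_compat; lra)) as H1.
  pose proof (ln_le_sub1 (m / y) ltac:(apply Rdiv_lt_0_compat; lra)) as H2.
  unfold Rdiv in H1, H2.
  rewrite ln_mult, ln_Rinv in H1 by (try apply Rinv_0_lt_compat; lra).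
  rewrite ln_mult, ln_Rinv in H2 by (try apply Rinv_0_lt_compat; lra).
  apply Rmult_le_compat_l with (r := x) in H1; [|lra].
  apply Rmult_le_compat_l with (r := y) in H2; [|lra].
  replace (x * (m * / x - 1)) with (m - x) in H1 by (field; lra).
  replace (y * (m * / y - 1)) with (m - y) in H2 by (field; lra).
  unfold m in *. lra.
Qed.

Theorem corollary4 (d : R -> R) (alpha : R) :
  is_derivation d -> 1 <= alpha ->
  (* F maps R_+ into R_+ *)
  (forall x, 0 < x -> 0 < F_da d alpha x) /\
  (* multiplicative on R_+ *)
  (forall x y, 0 < x -> 0 < y -> F_da d alpha (x * y) = F_da d alpha x * F_da d alpha y) /\
  (* Jensen convex on R_+ *)
  (forall x y, 0 < x -> 0 < y ->
     F_da d alpha ((x + y) / 2) <= (F_da d alpha x + F_da d alpha y) / 2) /\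
  (* if d is nonzero, F is discontinuous on R_+ *)
  ((exists t, d t <> 0) -> ~ (forall x, 0 < x -> continuity_pt (F_da d alpha) x)).
Proof.
  intros [Hadd Hmul] Ha.
  assert (HF : forall x, 0 < x -> F_da d alpha x = x * exp ((alpha - 1) * ln x + d x / x)).
  { intros x Hx. unfold F_da, Rpower. rewrite exp_plus.
    replace (alpha * ln x) with (ln x + (alpha - 1) * ln x) by ring.
    rewrite exp_plus, exp_ln by lra. ring. }
  split; [|split; [|split]].
  - intros x Hx. unfold F_da, Rpower. apply Rmult_lt_0_compat; apply exp_pos.
  - intros x y Hx Hy. unfold F_da, Rpower.
    rewrite ln_mult by lra. rewrite Hmul.
    replace ((x * d y + y * d x) / (x * y)) with (d x / x + d y / y) by (field; lra).
    rewrite Rmult_plus_distr_l, !exp_plus. ring.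
  - intros x y Hx Hy.
    set (m := (x+y)/2). assert (Hm : 0 < m) by (unfold m; lra).
    assert (Hdm : d m = (d x + d y) / 2).
    { assert (d (x + y) = d m + d m) by (rewrite <- Hadd; f_equal; unfold m; lra).
      rewrite Hadd in H. lra. }
    rewrite (HF m Hm), (HF x Hx), (HF y Hy).
    set (A := (alpha - 1) * ln x + d x / x).
    set (B := (alpha - 1) * ln y + d y / y).
    set (c := (x * A + y * B) / (x + y)).
    pose proof (tangent A c) as TA. pose proof (tangent B c) as TB.
    assert (Hc : (alpha - 1) * ln m + d m / m <= c).
    { pose proof (lnconv x y Hx Hy) as L. fold m in L.
      rewrite Hdm. unfold c, A, B.
      apply Rmult_le_reg_l with (r := x + y); [lra|].
      replace ((x + y) * ((alpha - 1) * ln m + (d x + d y) / 2 / m))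
        with ((alpha - 1) * ((x+y) * ln m) + (d x + d y)) by (unfold m; field; lra).
      replace ((x + y) * ((x * ((alpha - 1) * ln x + d x / x) + y * ((alpha - 1) * ln y + d y / y)) / (x + y)))
        with ((alpha - 1) * (x * ln x + y * ln y) + (d x + d y)) by (field; lra).
      apply Rplus_le_compat_r. apply Rmult_le_compat_l; lra. }
    assert (E1 : exp ((alpha - 1) * ln m + d m / m) <= exp c).
    { destruct Hc as [Hc|Hc]; [left; apply exp_increasing; auto | rewrite Hc; lra]. }
    assert (E2 : x * (exp c * (1 + (A - c))) + y * (exp c * (1 + (B - c))) = (x + y) * exp c).
    { unfold c. field. lra. }
    apply Rmult_le_compat_l with (r := x) in TA; [|lra].
    apply Rmult_le_compat_l with (r := y) in TB; [|lra].
    apply Rmult_le_compat_l with (r := m) in E1; [|lra].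
    unfold m in *. lra.
  - intros [t Ht] Hcont. apply Ht.
    assert (d0 : d 0 = 0).
    { pose proof (Hadd 0 0). rewrite Rplus_0_l in H. lra. }
    assert (d1 : d 1 = 0).
    { pose proof (Hmul 1 1). rewrite Rmult_1_l in H. lra. }
    assert (dN : forall z, d (- z) = - d z).
    { intro z. pose proof (Hadd z (- z)). rewrite Rplus_opp_r, d0 in H. lra. }
    assert (dnat : forall n, d (INR n) = 0).
    { induction n; [simpl; auto|]. rewrite S_INR, Hadd, IHn, d1. ring. }
    assert (dZ : forall z, d (IZR z) = 0).
    { intros [|p|p]; [simpl; auto| |].
      - rewrite <- Znat.positive_nat_Z, <- INR_IZR_INZ. apply dnat.
      - rewrite <- BinInt.Pos2Z.opp_pos, opp_IZR, dN.
        rewrite <- Znat.positive_nat_Z, <- INR_IZR_INZ, dnat. ring. }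
    assert (dpos : forall x, 0 < x -> d x = 0).
    { intros x Hx.
      set (h := fun y => y * (ln (F_da d alpha y) - alpha * ln y)).
      assert (Hh : forall y, 0 < y -> h y = d y).
      { intros y Hy. unfold h, F_da, Rpower. rewrite <- exp_plus, ln_exp. field. lra. }
      assert (Hln : forall y, 0 < y -> continuity_pt ln y).
      { intros y Hy. apply derivable_continuous_pt. exists (/ y).
        apply derivable_pt_lim_ln; auto. }
      assert (Hhc : continuity_pt h x).
      { unfold h.
        apply (continuity_pt_mult (fun y => y) (fun y => ln (F_da d alpha y) - alpha * ln y)).
        - apply derivable_continuous_pt, derivable_pt_id.
        - apply (continuity_pt_minus (fun y => ln (F_da d alpha y)) (fun y => alpha * ln y)).
          + apply (continuity_pt_comp (F_da d alpha) ln). apply Hcont; auto.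
            apply Hln. unfold F_da, Rpower. apply Rmult_lt_0_compat; apply exp_pos.
          + apply (continuity_pt_scal ln). apply Hln; auto. }
      destruct (Req_dec (d x) 0) as [E|E]; auto. exfalso.
      destruct (Hhc (Rabs (d x)) ltac:(apply Rabs_pos_lt; auto)) as [delta [Hd Hdel]].
      set (k := IZR (up (/ delta))).
      destruct (archimed (/ delta)) as [K1 K2]. fold k in K1.
      assert (Hk : 0 < k) by (pose proof (Rinv_0_lt_compat delta Hd); lra).
      set (q := IZR (up (k * x)) / k).
      destruct (archimed (k * x)) as [Q1 Q2].
      assert (Hq1 : x < q).
      { unfold q. apply Rmult_lt_reg_l with k; auto. unfold Rdiv.
        rewrite (Rmult_comm (IZR _)), <- Rmult_assoc, Rinv_r, Rmult_1_l by lra. lra. }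
      assert (Hq2 : q - x < delta).
      { assert (k * (q - x) <= 1).
        { unfold q. replace (k * (IZR (up (k * x)) / k - x)) with (IZR (up (k * x)) - k * x)
            by (field; lra). lra. }
        assert (delta * k > 1).
        { apply Rmult_lt_reg_l with (/ delta). apply Rinv_0_lt_compat; auto.
          rewrite <- Rmult_assoc, Rinv_l, Rmult_1_l, Rmult_1_r by lra. lra. }
        nra. }
      assert (dq : d q = 0).
      { assert (d (IZR (up (k * x))) = d (k * q)) by (f_equal; unfold q; field; lra).
        assert (dk : d k = 0) by apply dZ. rewrite dZ, Hmul, dk in H.
        assert (k * d q = 0) by lra.
        apply Rmult_integral in H0. destruct H0; lra. }
      assert (Hqd : D_x no_cond x q /\ R_dist q x < delta).
      { split. split. constructor. lra. unfold R_dist. rewrite Rabs_right; lra. }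
      specialize (Hdel q Hqd). simpl in Hdel. unfold R_dist in Hdel.
      rewrite Hh, Hh, dq in Hdel by lra.
      rewrite Rminus_0_l, Rabs_Ropp in Hdel. lra. }
    destruct (Rtotal_order t 0) as [H|[H|H]].
    + rewrite <- (Ropp_involutive t), dN, dpos; lra.
    + subst; auto.
    + apply dpos; auto.
Qed.
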